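(* Consider the signals $u_{MPC}$, $\hat u_{MPC}$, $\alpha_{MPC}$ defined in the context along a trajectory of the closed-loop system. Then for every sampling time $t=\Delta^j$, $j\in\mathbb{N}$, $\hat u_{MPC}(\Delta^j)=\hat u^*(\hat P^{fcst}_j,f(\Delta^j),\omega(\Delta^j),\alpha_{MPC}(\Delta^j))$ is a (globally) Lipschitz function of the sampled state $(f(\Delta^j),\omega(\Delta^j),\alpha_{MPC}(\Delta^j))$ (together with the forecast $\hat P^{fcst}_j$). Additionally, $\alpha_{MPC,i}(t)\hat u_{MPC,i}(t)\leqslant\epsilon_i\alpha_{MPC,i}^2(t)$ for all $t\geqslant0$ and all $i\in\mathcal{I}$.
   Context: Setting: $\mathcal{G}=(\mathcal{I},\mathcal{E})$ is a connected undirected graph with $\mathcal{I}=\{1,\dots,n\}$, $\mathcal{E}=\{e_1,\dots,e_m\}$, fixed orientation and incidence matrix $D\in\mathbb{R}^{m\times n}$; $M=\mathrm{diag}(M_i)$, $E=\mathrm{diag}(E_i)$ with $M_i,E_i>0$; $Y_b\in\mathbb{R}^{m\times m}$ diagonal with positive entries; $\mathcal{I}_\omega\subseteq\mathcal{I}_u\subseteq\mathcal{I}$; $\mathbb{A}=\{y\in\mathbb{R}^n: y_w=0\ \forall w\notin\mathcal{I}_u\}$. The network dynamics are $\dot f=Y_bD\omega$, $M\dot\omega=-E\omega-D^Tf+p(t)+\alpha(t)$ with $\alpha(t)\in\mathbb{A}$. Parameters: $T,\tilde t>0$, $N=\lceil\tilde t/T\rceil$, $c_i,\epsilon_i,T_i>0$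 ($i\in\mathcal{I}_u$), $d>0$, $\underline\omega_i<\bar\omega_i$ ($i\in\mathcal{I}_\omega$). For $\hat P=[\hat p(0),\dots,\hat p(N-1)]\in\mathbb{R}^{n\times N}$, $f_0\in\mathbb{R}^m$, $\omega_0\in\mathbb{R}^n$, $a_0\in\mathbb{A}$, let $\hat u^*(\hat P,f_0,\omega_0,a_0)$ denote the $\hat u$-component of the (unique) optimal solution of the problem: minimize $\sum_{i\in\mathcal{I}_u}c_i\hat u_i^2+d\beta^2$ over $\hat f(k)\in\mathbb{R}^m,\hat\omega(k),\hat\alpha(k)\in\mathbb{R}^n$ ($k=0..N$), $\hat u\in\mathbb{R}^n$, $\beta\in\mathbb{R}$, subject to, for $k=0,\dots,N-1$: $\hat f(k+1)=\hat f(k)+TY_bD\hat\omega(k)$; $M\hat\omega(k+1)=M\hat\omega(k)+T(-E\hat\omega(k)-D^T\hat f(k)+\hat p(k)+\hat u)$; $\hat\alpha_i(k+1)=\hat\alpha_i(k)+T(-\hat\alpha_i(k)/T_i-\hat\omega_i(k)+\hat u_i)$ for $i\in\mathcal{I}_u$; $\hat\alpha_i\equiv0$ for $i\notin\mathcal{I}_u$; $\hat u\in\mathbb{A}$; $\hat f(0)=f_0,\hat\omega(0)=\omega_0,\hat\alpha(0)=a_0$; $\underline\omega_i-\beta\leqslant\hat\omega_i(k+1)\leqslant\bar\omega_i+\beta$ for $i\in\mathcal{I}_\omega$; $|\hat u_i|\leqslant\epsilon_i|a_{0,i}|$ for $i\in\mathcal{I}_u$. Sampling times $0=\Delta^0<\Delta^1<\cdots$;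 at each $\Delta^j$ a piece-wise continuous forecast $p^{fcst}_{\Delta^j}:[\Delta^j,\Delta^j+\tilde t]\to\mathbb{R}^n$ is given and $\hat P^{fcst}_j=[p^{fcst}_{\Delta^j}(\Delta^j+kT)]_{k=0}^{N-1}$. The MPC output is $u_{MPC}(t)=\hat u^*(\hat P^{fcst}_j,f(\Delta^j),\omega(\Delta^j),\alpha_{MPC}(\Delta^j))$ for $t\in[\Delta^j,\Delta^{j+1})$. The stability filter is $\hat u_{MPC,i}(t)=\mathrm{sat}(u_{MPC,i}(t);\epsilon_i|\alpha_{MPC,i}(t)|,-\epsilon_i|\alpha_{MPC,i}(t)|)$, where $\mathrm{sat}(a;b,-b)=\max\{-b,\min\{b,a\}\}$ for $b\geqslant 0$ (with $\epsilon_i$ taken as any positive value, e.g. $1$, for $i\notin\mathcal{I}_u$, where all quantities vanish). The low-pass filter is $\dot\alpha_{MPC,i}=-\alpha_{MPC,i}/T_i-\omega_i+\hat u_{MPC,i}$ for $i\in\mathcal{I}_u$ and $\alpha_{MPC,i}\equiv0$ for $i\notin\mathcal{I}_u$. *)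

(* Defs.v *)
From HB Require Import structures.
From mathcomp Require Import all_boot all_order all_algebra.
From mathcomp Require Import all_classical all_reals all_analysis.
Set Implicit Arguments. Unset Strict Implicit. Unset Printing Implicit Defensive.
Import Order.TTheory GRing.Theory Num.Theory.
Import numFieldNormedType.Exports.
Local Open Scope classical_set_scope.
Local Open Scope ring_scope.

Section Defs.
Variable R : realType.

Definition incidence_matrix (m n : nat) (D : 'M[R]_(m, n)) : Prop :=
  forall e : 'I_m, exists i j : 'I_n,
    i != j /\ D e i = 1 /\ D e j = -1 /\
    (forall k, k != i -> k != j -> D e k = 0).

Definition graph_adj (m n : nat) (D : 'M[R]_(m, n)) : rel 'I_n :=
  fun i j => [exists e : 'I_m, (D e i != 0) && (D e j != 0)].

Definition graph_connected (m n : nat) (D : 'M[R]_(m, n)) : Prop :=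
  forall i j : 'I_n, connect (graph_adj D) i j.

Definition inA (n : nat) (Iu : {set 'I_n}) (y : 'cV[R]_n) : Prop :=
  forall w : 'I_n, w \notin Iu -> y w 0 = 0.

(* sup norm on matrices (all norms on finite-dim spaces are equivalent) *)
Definition mxnorm (p q : nat) (A : 'M[R]_(p, q)) : R :=
  \big[Num.max/0]_(i < p) \big[Num.max/0]_(j < q) `|A i j|.

Definition sat (a b : R) : R := Num.max (- b) (Num.min b a).

(* Diagonal matrices M, E, Y_b are given by their diagonals (row vectors).
   Trajectory variables fh(k), wh(k), ah(k) (k = 0..N) are the columns of
   F : 'M_(m, N.+1), W, Aa : 'M_(n, N.+1); the forecast is P : 'M_(n, N). *)
Definition mpc_feasible (m n N : nat) (D : 'M[R]_(m, n))
  (Mr Er : 'rV[R]_n) (Yr : 'rV[R]_m) (Iu Iw : {set 'I_n})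
  (T : R) (eps Ti wlo whi : 'cV[R]_n)
  (P : 'M[R]_(n, N)) (f0 : 'cV[R]_m) (w0 a0 : 'cV[R]_n)
  (F : 'M[R]_(m, N.+1)) (W Aa : 'M[R]_(n, N.+1)) (u : 'cV[R]_n) (beta : R)
  : Prop :=
  (forall k : 'I_N,
        col (inord k.+1) F = col (inord k) F
                             + T *: (diag_mx Yr *m D *m col (inord k) W)) /\
      (forall k : 'I_N,
        diag_mx Mr *m col (inord k.+1) W =
          diag_mx Mr *m col (inord k) W
          + T *: (- (diag_mx Er *m col (inord k) W) - D^T *m col (inord k) F
                  + col k P + u)) /\
      (forall (k : 'I_N) (i : 'I_n), i \in Iu ->
        Aa i (inord k.+1) = Aa i (inord k)
                            + T * (- (Aa i (inord k) / Ti i 0) - W i (inord k) + u i 0)) /\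
      (forall (k : 'I_N.+1) (i : 'I_n), i \notin Iu -> Aa i k = 0) /\
      inA Iu u /\
      [/\ col 0 F = f0, col 0 W = w0 & col 0 Aa = a0] /\
      (forall (k : 'I_N) (i : 'I_n), i \in Iw ->
        wlo i 0 - beta <= W i (inord k.+1) <= whi i 0 + beta) /\
    (forall i : 'I_n, i \in Iu -> `|u i 0| <= eps i 0 * `|a0 i 0|).

Definition mpc_cost (n : nat) (Iu : {set 'I_n}) (c : 'cV[R]_n) (d : R)
  (u : 'cV[R]_n) (beta : R) : R :=
  \sum_(i in Iu) c i 0 * (u i 0) ^+ 2 + d * beta ^+ 2.

Definition mpc_optimal (m n N : nat) (D : 'M[R]_(m, n))
  (Mr Er : 'rV[R]_n) (Yr : 'rV[R]_m) (Iu Iw : {set 'I_n})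
  (T : R) (c eps Ti wlo whi : 'cV[R]_n) (d : R)
  (P : 'M[R]_(n, N)) (f0 : 'cV[R]_m) (w0 a0 : 'cV[R]_n)
  (F : 'M[R]_(m, N.+1)) (W Aa : 'M[R]_(n, N.+1)) (u : 'cV[R]_n) (beta : R)
  : Prop :=
  mpc_feasible D Mr Er Yr Iu Iw T eps Ti wlo whi P f0 w0 a0 F W Aa u beta /\
  forall F' W' Aa' u' beta',
    mpc_feasible D Mr Er Yr Iu Iw T eps Ti wlo whi P f0 w0 a0 F' W' Aa' u' beta' ->
    mpc_cost Iu c d u beta <= mpc_cost Iu c d u' beta'.

(* u-hat-star: the u-component of the (unique) optimal solution;
   chosen by xget, default 0 if no optimal solution exists. *)
Definition uhat_star (m n N : nat) (D : 'M[R]_(m, n))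
  (Mr Er : 'rV[R]_n) (Yr : 'rV[R]_m) (Iu Iw : {set 'I_n})
  (T : R) (c eps Ti wlo whi : 'cV[R]_n) (d : R)
  (P : 'M[R]_(n, N)) (f0 : 'cV[R]_m) (w0 a0 : 'cV[R]_n) : 'cV[R]_n :=
  xget 0 [set u | exists F W Aa beta,
            mpc_optimal D Mr Er Yr Iu Iw T c eps Ti wlo whi d P f0 w0 a0 F W Aa u beta].

Definition forecast_mx (n N : nat) (T Delta : R) (pf : R -> 'cV[R]_n) : 'M[R]_(n, N) :=
  \matrix_(i < n, k < N) pf (Delta + k%:R * T) i 0.

(* x solves x' = g on [0, +oo) in the Caratheodory (integral) sense *)
Definition solves_ode (g x : R -> R) : Prop :=
  forall t : R, 0 <= t ->
    (lebesgue_measure : set R -> \bar R).-integrable `[0, t] (EFin \o g) /\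
    x t = x 0 + \int[lebesgue_measure]_(s in `[0, t]) g s.

End Defs.

(* Main.v *)
Require Import Defs.
From HB Require Import structures.
From mathcomp Require Import all_boot all_order all_algebra.
From mathcomp Require Import all_classical all_reals all_analysis.
Import Order.TTheory GRing.Theory Num.Theory.
Import numFieldNormedType.Exports.
Local Open Scope classical_set_scope.
Local Open Scope ring_scope.
From mathcomp Require Import ring lra.
Set Implicit Arguments. Unset Strict Implicit. Unset Printing Implicit Defensive.


Section QP.
Variable R : realType.
Variable p : nat.
Variable h : 'rV[R]_p.
Hypothesis hpos : forall l, 0 < h 0 l.
Variable I : finType.
Variable a : I -> 'rV[R]_p.

Implicit Types (z y x : 'rV[R]_p) (b : I -> R) (S Q : {set I}).

Definition dot (z y : 'rV[R]_p) : R := \sum_l z 0 l * y 0 l.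
Definition q (z : 'rV[R]_p) : R := \sum_l h 0 l * z 0 l ^+ 2.
Definition feas (S Q : {set I}) (b : I -> R) (z : 'rV[R]_p) : Prop :=
  (forall j, j \in S -> dot z (a j) <= b j) /\
  (forall j, j \in Q -> dot z (a j) = b j).
Definition opt S Q b z : Prop := feas S Q b z /\ forall y, feas S Q b y -> q z <= q y.
Definition nz (z : 'rV[R]_p) : R := \big[Num.max/0]_l `|z 0 l|.
Definition nb (b : I -> R) : R := \big[Num.max/0]_j `|b j|.

Lemma nz_ge z l : `|z 0 l| <= nz z.
Proof. apply: le_bigmax. Qed.
Lemma nz_le z c : 0 <= c -> (forall l, `|z 0 l| <= c) -> nz z <= c.
Proof. by move=> c0 H; apply: bigmax_le. Qed.
Lemma nz_ge0 z : 0 <= nz z.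
Proof. exact: bigmax_ge_id. Qed.
Lemma nb_ge b j : `|b j| <= nb b.
Proof. apply: le_bigmax. Qed.
Lemma nb_le b c : 0 <= c -> (forall j, `|b j| <= c) -> nb b <= c.
Proof. by move=> c0 H; apply: bigmax_le. Qed.
Lemma nb_ge0 b : 0 <= nb b.
Proof. exact: bigmax_ge_id. Qed.

Lemma dotD z1 z2 y : dot (z1 + z2) y = dot z1 y + dot z2 y.
Proof. by rewrite /dot -big_split; apply: eq_bigr => l _; rewrite mxE mulrDl. Qed.
Lemma dotZ t z y : dot (t *: z) y = t * dot z y.
Proof. by rewrite /dot mulr_sumr; apply: eq_bigr => l _; rewrite mxE mulrA. Qed.
Lemma dotN z y : dot (- z) y = - dot z y.
Proof. by rewrite /dot -sumrN; apply: eq_bigr => l _; rewrite mxE mulNr. Qed.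
Lemma dotB z1 z2 y : dot (z1 - z2) y = dot z1 y - dot z2 y.
Proof. by rewrite dotD dotN. Qed.

Lemma q_ge0 z : 0 <= q z.
Proof. by apply: sumr_ge0 => l _; apply: mulr_ge0; [exact: ltW | exact: sqr_ge0]. Qed.

Definition cmb (x y : 'rV[R]_p) t := x + t *: (y - x).

Lemma dot_cmb x y t v : dot (cmb x y t) v = dot x v + t * (dot y v - dot x v).
Proof. by rewrite /cmb dotD dotZ dotB. Qed.

Lemma q_cmb x y t : 0 <= t <= 1 -> q (cmb x y t) <= (1 - t) * q x + t * q y.
Proof.
case/andP=> t0 t1; rewrite /q mulr_sumr mulr_sumr -big_split /=.
apply: ler_sum => l _; rewrite /cmb !mxE.
have hl := hpos l.
set X := x 0 l; set Y := y 0 l.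
rewrite -subr_ge0; set e := (_ - _).
have -> : e = h 0 l * (t * (1 - t) * (X - Y) ^+ 2) by rewrite /e; ring.
apply: mulr_ge0; first exact: ltW.
by apply: mulr_ge0; [apply: mulr_ge0 => //; rewrite subr_ge0 | exact: sqr_ge0].
Qed.


Lemma q_cmbE x y t : q (cmb x y t) = (1 - t) * q x + t * q y - t * (1 - t) * q (x - y).
Proof.
rewrite /q mulr_sumr mulr_sumr mulr_sumr -big_split -sumrB /=.
apply: eq_bigr => l _; rewrite /cmb !mxE; ring.
Qed.

Lemma q_eq0 z : q z = 0 -> z = 0.
Proof.
move=> /eqP; rewrite psumr_eq0 => [H|l _]; last first.
  by apply: mulr_ge0; [exact: ltW | exact: sqr_ge0].
apply/rowP => l; rewrite mxE.
move/allP: H => /(_ l (mem_index_enum _)) /implyP /(_ isT).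
by rewrite mulf_eq0 (gt_eqF (hpos l)) /= sqrf_eq0 => /eqP.
Qed.

Definition bc (b1 b2 : I -> R) t := fun j => b1 j + t * (b2 j - b1 j).

Lemma feas_ext S Q b b' z : (forall j, b j = b' j) -> feas S Q b z -> feas S Q b' z.
Proof. by move=> E [H1 H2]; split=> j jS; rewrite -E; [exact: H1 | exact: H2]. Qed.

Lemma feas_cmb S Q b1 b2 x y t : 0 <= t <= 1 ->
  feas S Q b1 x -> feas S Q b2 y -> feas S Q (bc b1 b2 t) (cmb x y t).
Proof.
case/andP=> t0 t1 [H1 H2] [G1 G2]; split=> j jS; rewrite dot_cmb /bc.
  have := H1 j jS; have := G1 j jS; set X := dot x _; set Y := dot y _ => Hy Hx.
  have -> : X + t * (Y - X) = (1 - t) * X + t * Y by ring.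
  have -> : b1 j + t * (b2 j - b1 j) = (1 - t) * b1 j + t * b2 j by ring.
  by apply: lerD; apply: ler_wpM2l => //; rewrite subr_ge0.
by rewrite (H2 j jS) (G2 j jS).
Qed.

Lemma bc_sub1 b1 b2 t j : b1 j - bc b1 b2 t j = t * (b1 j - b2 j).
Proof. rewrite /bc; ring. Qed.

Lemma bc_sub2 b1 b2 t j : bc b1 b2 t j - b2 j = (1 - t) * (b1 j - b2 j).
Proof. rewrite /bc; ring. Qed.

Lemma bc_same b t j : bc b b t j = b j.
Proof. by rewrite /bc subrr mulr0 addr0. Qed.

Lemma opt_uniq S Q b z1 z2 : opt S Q b z1 -> opt S Q b z2 -> z1 = z2.
Proof.
move=> [F1 O1] [F2 O2].
have t01 : (0 <= 2^-1 :> R) && (2^-1 <= 1 :> R) by apply/andP; split; lra.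
have Fm := feas_ext (bc_same b _) (feas_cmb t01 F1 F2).
have h1 := O1 _ Fm; have h2 := O2 _ Fm.
have e12 : q z1 = q z2 by apply/le_anti; rewrite O1 // O2.
move: h1; rewrite q_cmbE -e12 => h1.
have : q (z1 - z2) <= 0.
  have H := q_ge0 (z1 - z2).
  move: h1; set Q1 := q z1; set D := q (z1 - z2) => h1.
  have : 2^-1 * (1 - 2^-1) * D <= 0 :> R by lra.
  by rewrite pmulr_rle0 //; lra.
move=> H; apply/eqP; rewrite -subr_eq0; apply/eqP/q_eq0/le_anti.
by rewrite H q_ge0.
Qed.


Section Base.
Variable Q : {set I}.
Let c := #|I|.
Definition Emx : 'M[R]_(p, c) :=
  \matrix_(l, k) (if enum_val k \in Q then a (enum_val k) 0 l else 0).
Definition eb b : 'rV[R]_c := \row_k (if enum_val k \in Q then b (enum_val k) else 0).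
Definition Hinv : 'M[R]_p := diag_mx (\row_l (h 0 l)^-1).
Definition Gmx := Emx^T *m Hinv *m Emx.
Definition Kmx := pinvmx Gmx *m Emx^T *m Hinv.

Lemma feas0E b z : feas (finset.set0 : {set I}) Q b z <-> z *m Emx = eb b.
Proof.
have E k : (z *m Emx) 0 k = if enum_val k \in Q then dot z (a (enum_val k)) else 0.
  rewrite mxE /Emx; case: ifP => kQ.
    by apply: eq_bigr => l _; rewrite mxE kQ.
  by apply: big1 => l _; rewrite mxE kQ mulr0.
split.
  case=> _ H; apply/rowP => k; rewrite E mxE; case: ifP => // kQ; exact: H.
move=> H; split=> [j|j jQ]; first by rewrite inE.
have := congr1 (fun M : 'rV[R]_c => M 0 (enum_rank j)) H; rewrite E mxE enum_rankK jQ; exact.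
Qed.

Lemma EC0 : Emx *m cokermx Gmx = 0.
Proof.
set C := cokermx Gmx; set X := Emx *m C.
have H0 : X^T *m Hinv *m X = 0.
  rewrite /X trmx_mul.
  have -> : C^T *m Emx^T *m Hinv *m (Emx *m C) = C^T *m Gmx *m C by rewrite /Gmx !mulmxA.
  by rewrite -mulmxA mulmx_coker mulmx0.
apply/matrixP => l k.
have H1 := congr1 (fun M : 'M[R]_c => M k k) H0; rewrite !mxE in H1.
rewrite (eq_bigr (fun l => (h 0 l)^-1 * X l k ^+ 2)) in H1; last first.
  by move=> i _; rewrite /Hinv mul_mx_diag !mxE; ring.
move/eqP: H1; rewrite psumr_eq0 => [H1|i _]; last first.
  by apply: mulr_ge0; [rewrite invr_ge0; exact: ltW | exact: sqr_ge0].
move/allP: H1 => /(_ l (mem_index_enum _)) /implyP /(_ isT).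
rewrite mulf_eq0 invr_eq0 (gt_eqF (hpos l)) /= sqrf_eq0 => /eqP ->.
by rewrite mxE.
Qed.

Lemma base_opt b : (exists y, feas (finset.set0 : {set I}) Q b y) -> opt (finset.set0 : {set I}) Q b (eb b *m Kmx).
Proof.
case=> y /feas0E Hy.
have sub : (eb b <= Gmx)%MS.
  by rewrite submxE -Hy -mulmxA EC0 mulmx0.
have Fz : feas (finset.set0 : {set I}) Q b (eb b *m Kmx).
  apply/feas0E.
  have -> : eb b *m Kmx *m Emx = eb b *m pinvmx Gmx *m Gmx by rewrite /Kmx /Gmx !mulmxA.
  by rewrite mulmxKpV.
split=> // y' /feas0E Hy'.
set z := eb b *m Kmx; set v := y' - z.
have vE : v *m Emx = 0 by rewrite /v mulmxBl Hy' (proj1 (feas0E _ _) Fz) subrr.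
have -> : y' = z + v by rewrite /v addrC subrK.
have cross : \sum_l h 0 l * z 0 l * v 0 l = 0.
  set mu := eb b *m pinvmx Gmx.
  have zl l : h 0 l * z 0 l = (mu *m Emx^T) 0 l.
    have -> : z = mu *m Emx^T *m Hinv by rewrite /z /Kmx /mu !mulmxA.
    rewrite /Hinv mul_mx_diag mxE [X in _ * (_ * X)]mxE.
    by rewrite mulrCA mulfV ?mulr1 // gt_eqF.
  rewrite (eq_bigr (fun l => (mu *m Emx^T) 0 l * v 0 l)); last by move=> l _; rewrite zl.
  have vk k : \sum_l v 0 l * Emx l k = 0.
    by have := congr1 (fun M : 'rV[R]_c => M 0 k) vE; rewrite !mxE.
  transitivity (\sum_k mu 0 k * \sum_l v 0 l * Emx l k); last first.
    by apply: big1 => k _; rewrite vk mulr0.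
  under eq_bigr do rewrite mxE big_distrl.
  rewrite exchange_big; apply: eq_bigr => k _; rewrite big_distrr.
  by apply: eq_bigr => l _; rewrite /= [Emx^T k l]mxE -mulrA [Emx l k * _]mulrC.
have -> : q (z + v) = q z + 2 * (\sum_l h 0 l * z 0 l * v 0 l) + q v.
  rewrite /q mulr_sumr -!big_split /=; apply: eq_bigr => l _; rewrite mxE; ring.
by rewrite cross mulr0 addr0 lerDl q_ge0.
Qed.

End Base.

Definition exP S Q := forall b, (exists y, feas S Q b y) -> exists z, opt S Q b z.
Definition lipP S Q := exists L, 0 <= L /\ forall b1 b2 z1 z2,
  opt S Q b1 z1 -> opt S Q b2 z2 -> nz (z1 - z2) <= L * nb (fun j => b1 j - b2 j).

Lemma sum_ge_term (J : finType) (F : J -> R) j : (forall j, 0 <= F j) -> F j <= \sum_j F j.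
Proof. by move=> F0; rewrite (bigD1 j) //= lerDl sumr_ge0. Qed.

Lemma nz_mulmx c (x : 'rV[R]_c) (K : 'M[R]_(c, p)) B : 0 <= B ->
  (forall k, `|x 0 k| <= B) -> nz (x *m K) <= B * \sum_k \sum_l `|K k l|.
Proof.
move=> B0 Hx; apply: nz_le => [|l]; first by apply: mulr_ge0 => //; apply: sumr_ge0 => k _; apply: sumr_ge0 => l _.
rewrite mxE; apply: le_trans (ler_norm_sum _ _ _) _.
rewrite mulr_sumr; apply: ler_sum => k _; rewrite normrM.
apply: le_trans (_ : B * `|K k l| <= _).
  by apply: ler_wpM2r => //.
apply: ler_wpM2l => //; apply: (@sum_ge_term _ (fun l => `|K k l|)) => j; exact: normr_ge0.
Qed.

Lemma base_ex Q : exP (finset.set0 : {set I}) Q.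
Proof. by move=> b Hb; exists (eb Q b *m Kmx Q); exact: base_opt. Qed.

Lemma base_lip Q : lipP (finset.set0 : {set I}) Q.
Proof.
exists (\sum_k \sum_l `|Kmx Q k l|); split; first by apply: sumr_ge0 => k _; apply: sumr_ge0 => l _.
move=> b1 b2 z1 z2 O1 O2.
have -> : z1 = eb Q b1 *m Kmx Q.
  by apply: (opt_uniq O1); apply: base_opt; exists z1; case: O1.
have -> : z2 = eb Q b2 *m Kmx Q.
  by apply: (opt_uniq O2); apply: base_opt; exists z2; case: O2.
rewrite -mulmxBl mulrC; apply: nz_mulmx; first exact: nb_ge0.
move=> k; rewrite !mxE; case: ifP => _; last by rewrite subrr normr0 nb_ge0.
exact: (nb_ge (fun j => b1 j - b2 j)).
Qed.

Lemma opt_ext S Q b b' z : (forall j, b j = b' j) -> opt S Q b z -> opt S Q b' z.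
Proof.
move=> E [F O]; split; first exact: feas_ext F.
by move=> y Fy; apply: O; apply: (feas_ext _ Fy) => j; rewrite E.
Qed.

Lemma nz_sym x y : nz (x - y) = nz (y - x).
Proof. by apply: eq_bigr => l _; rewrite !mxE distrC. Qed.

Lemma nb_sym b1 b2 : nb (fun j => b1 j - b2 j) = nb (fun j => b2 j - b1 j).
Proof. by apply: eq_bigr => j _; rewrite distrC. Qed.

Lemma nz_tri x y w : nz (x - y) <= nz (x - w) + nz (w - y).
Proof.
apply: nz_le => [|l]; first by rewrite addr_ge0 ?nz_ge0.
rewrite !mxE; apply: le_trans (ler_distD (w 0 l) _ _) _.
by apply: lerD; [have := nz_ge (x - w) l | have := nz_ge (w - y) l]; rewrite !mxE.
Qed.

Lemma nb_lin b1 b2 (f : I -> R) c : (forall j, f j = c * (b1 j - b2 j)) ->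
  nb f <= `|c| * nb (fun j => b1 j - b2 j).
Proof.
move=> E; apply: nb_le => [|j]; first by rewrite mulr_ge0 ?nb_ge0.
by rewrite E normrM ler_wpM2l // (nb_ge (fun j => b1 j - b2 j)).
Qed.

Lemma dot_bound v w : `|dot v w| <= nz v * \sum_l `|w 0 l|.
Proof.
rewrite /dot mulr_sumr; apply: le_trans (ler_norm_sum _ _ _) _.
by apply: ler_sum => l _; rewrite normrM ler_wpM2r // nz_ge.
Qed.

Definition clamp (t : R) : R := if t < 0 then 0 else if 1 < t then 1 else t.

Lemma clamp01 t : 0 <= clamp t <= 1.
Proof. rewrite /clamp; case: ifP => H1; [lra|]; case: ifP => H2; [lra|]. by move: H1 H2 => /negbT; rewrite -leNgt => ? /negbT; rewrite -leNgt => ?; lra. Qed.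

Lemma clamp_id t : 0 <= t <= 1 -> clamp t = t.
Proof. by case/andP=> t0 t1; rewrite /clamp ltNge t0 /= ltNge t1. Qed.

Lemma clamp_lip t s : `|clamp t - clamp s| <= `|t - s|.
Proof.
have h1 := ler_norm (t - s); have h2 := ler_norm (s - t); rewrite distrC in h2.
rewrite ler_norml /clamp.
case: (ltP t 0) => ?; case: (ltP s 0) => ?; case: (ltP 1 t) => ?; case: (ltP 1 s) => ? /=; lra.
Qed.

Lemma lip_cont (f : R -> R) (K : R) : 0 <= K ->
  (forall u v : R, `|f u - f v| <= K * `|u - v|) -> continuous f.
Proof.
move=> K0 H x0; apply/cvgrPdist_le => e e0.
near=> t. apply: le_trans (H x0 t) _.
near: t; apply/nbhs_normP; exists (e / (K + 1)).
  by rewrite /= divr_gt0 // ltr_wpDl.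
move=> t /= Ht.
have K1 : 0 < K + 1 by rewrite ltr_wpDl.
apply: le_trans (_ : K * (e / (K + 1)) <= e).
  by apply: ler_wpM2l => //; apply: ltW.
rewrite mulrA ler_pdivrMr //; nra.
Unshelve. all: by end_near. Qed.

Section Step.
Variables (S Q : {set I}) (i : I).
Hypothesis Hi : i \in S.
Let S' := S :\ i.
Let Q' := i |: Q.

Lemma feasFP b z : feas S Q b z <-> feas S' Q b z /\ dot z (a i) <= b i.
Proof.
split.
  case=> H1 H2; split; last exact: H1.
  by split=> // j; rewrite in_setD1 => /andP[_]; exact: H1.
case=> [[H1 H2] H3]; split=> // j jS.
have [->|ji] := eqVneq j i; first exact H3.
by apply: H1; rewrite in_setD1 ji.
Qed.

Lemma feasEP b z : feas S' Q' b z <-> feas S' Q b z /\ dot z (a i) = b i.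
Proof.
split.
  case=> H1 H2; split; last by apply: H2; rewrite in_setU1 eqxx.
  by split=> // j jQ; apply: H2; rewrite in_setU1 jQ orbT.
case=> [[H1 H2] H3]; split=> // j; rewrite in_setU1 => /orP[/eqP->|]; [exact: H3 | exact: H2].
Qed.

Lemma L1 b z : opt S' Q b z -> dot z (a i) <= b i -> opt S Q b z.
Proof.
case=> F O H; split; first by apply/feasFP.
by move=> y /feasFP [Fy _]; apply: O.
Qed.

Lemma L3 b z : opt S Q b z -> dot z (a i) = b i -> opt S' Q' b z.
Proof.
case=> /feasFP [F _] O H; split; first by apply/feasEP.
move=> y /feasEP [Fy Hy]; apply: O; apply/feasFP; split=> //; by rewrite Hy.
Qed.

Lemma L2 b z : opt S Q b z -> dot z (a i) < b i -> opt S' Q b z.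
Proof.
case=> /feasFP [F _] O H; split=> // y Fy.
set dz := dot z (a i); set dy := dot y (a i).
set t := (b i - dz) / ((b i - dz) + `|dy - dz|).
have pos : 0 < b i - dz by rewrite subr_gt0.
have den : 0 < (b i - dz) + `|dy - dz| by rewrite ltr_wpDr.
have t0 : 0 < t by rewrite divr_gt0.
have t1 : t <= 1 by rewrite ler_pdivrMr // mul1r lerDl.
have t01 : 0 <= t <= 1 by rewrite (ltW t0) t1.
have Fw : feas S Q b (cmb z y t).
  apply/feasFP; split; first exact: (feas_ext (bc_same b t) (feas_cmb t01 F Fy)).
  rewrite dot_cmb -/dz -/dy.
  have : t * (dy - dz) <= t * `|dy - dz| by apply: ler_wpM2l; [exact: ltW | exact: ler_norm].
  have : t * `|dy - dz| <= b i - dz.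
    rewrite /t mulrAC ler_pdivrMr //; apply: ler_wpM2l; [exact: (ltW pos) | apply: ler_wpDl; [exact: (ltW pos) | exact: lexx]].
  lra.
have h2 := O _ Fw; have h1 := @q_cmb z y t t01.
have : t * q z <= t * q y by nra.
by rewrite ler_pM2l.
Qed.

Lemma cross b x z : feas S' Q b x -> feas S' Q b z -> dot x (a i) <= b i -> b i < dot z (a i) ->
  exists s, 0 <= s <= 1 /\ feas S' Q' b (cmb x z s).
Proof.
move=> Fx Fz Hx Hz.
set dx := dot x (a i) in Hx *; set dz := dot z (a i) in Hz *.
have den : 0 < dz - dx by rewrite subr_gt0; apply: le_lt_trans Hz.
set s := (b i - dx) / (dz - dx).
have s0 : 0 <= s by apply: divr_ge0; [rewrite subr_ge0 | exact: ltW den].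
have s1 : s <= 1 by rewrite ler_pdivrMr // mul1r lerD2r; exact: ltW.
have s01 : 0 <= s <= 1 by rewrite s0 s1.
exists s; split => //; apply/feasEP; split.
  exact: (feas_ext (bc_same b s) (feas_cmb s01 Fx Fz)).
by rewrite dot_cmb -/dx -/dz /s mulfVK ?gt_eqF // addrC subrK.
Qed.

Lemma L4 : exP S' Q -> exP S' Q' -> exP S Q.
Proof.
move=> ER EE b [y /feasFP [Fy Hy]].
have [z' [Fz' Oz']] := ER b (ex_intro _ y Fy).
have [Hle|Hgt] := leP (dot z' (a i)) (b i).
  by exists z'; apply: L1.
have [s [s01 Fw]] := cross Fy Fz' Hy Hgt.
have [z'' [Fz'' Oz'']] := EE b (ex_intro _ _ Fw).
exists z''; split.
  by have [F1 F2] := proj1 (feasEP _ _) Fz''; apply/feasFP; split => //; rewrite F2.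
move=> y' /feasFP [Fy' Hy'].
have [s' [s'01 Fw']] := cross Fy' Fz' Hy' Hgt.
apply: le_trans (Oz'' _ Fw') _.
apply: le_trans (@q_cmb y' z' s' s'01) _.
have := Oz' _ Fy'; case/andP: s'01 => ? ?; nra.
Qed.

Lemma L5 : exP S' Q -> lipP S' Q -> lipP S' Q' -> lipP S Q.
Proof.
move=> ER [LR [LR0 HR]] [LE [LE0 HE]].
exists (LR + LE); split; first by rewrite addr_ge0.
have mixed : forall b1 b2 z1 z2, opt S Q b1 z1 -> opt S Q b2 z2 ->
    dot z1 (a i) < b1 i -> dot z2 (a i) = b2 i ->
    nz (z1 - z2) <= (LR + LE) * nb (fun j => b1 j - b2 j).
  move=> b1 b2 z1 z2 O1 O2 H1 H2.
  have R1 := L2 O1 H1; have E2 := L3 O2 H2.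
  set N := nb (fun j => b1 j - b2 j).
  have N0 : 0 <= N by exact: nb_ge0.
  pose bt t := bc b1 b2 t.
  have Fbt : forall t, 0 <= t <= 1 -> exists y, feas S Q (bt t) y.
    by move=> t t01; exists (cmb z1 z2 t); exact: feas_cmb t01 (proj1 O1) (proj1 O2).
  pose zr b := xget 0 (opt S' Q b).
  have zrO : forall t, 0 <= t <= 1 -> opt S' Q (bt t) (zr (bt t)).
    move=> t t01; apply: xgetPex; apply: ER.
    by have [y /feasFP [Fy _]] := Fbt t t01; exists y.
  pose phi t := dot (zr (bt (clamp t))) (a i) - bt (clamp t) i.
  set A := \sum_l `|a i 0 l|.
  have A0 : 0 <= A by apply: sumr_ge0.
  have nbt : forall t s, nb (fun j => bt t j - bt s j) <= `|t - s| * N.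
    move=> t s; rewrite distrC; apply: nb_lin => j; rewrite /bt /bc /=; ring.
  have phiL : forall t s, `|phi t - phi s| <= ((LR * A + 1) * N) * `|t - s|.
    move=> t s; rewrite /phi.
    set ct := clamp t; set cs := clamp s.
    have Ot := zrO ct (clamp01 t); have Os := zrO cs (clamp01 s).
    have e : dot (zr (bt ct)) (a i) - bt ct i - (dot (zr (bt cs)) (a i) - bt cs i)
      = dot (zr (bt ct) - zr (bt cs)) (a i) - (bt ct i - bt cs i) by rewrite dotB; ring.
    rewrite e; apply: le_trans (ler_normB _ _) _.
    have d1 : `|dot (zr (bt ct) - zr (bt cs)) (a i)| <= LR * (`|ct - cs| * N) * A.
      apply: le_trans (dot_bound _ _) _; apply: ler_wpM2r => //.
      apply: le_trans (HR _ _ _ _ Ot Os) _; apply: ler_wpM2l => //; exact: nbt.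
    have d2 : `|bt ct i - bt cs i| <= `|ct - cs| * N.
      by apply: le_trans (nbt ct cs); exact: (nb_ge (fun j => bt ct j - bt cs j)).
    have c1 := clamp_lip t s; rewrite -/ct -/cs in c1.
    have c0 := normr_ge0 (ct - cs).
    have : LR * (`|ct - cs| * N) * A + `|ct - cs| * N <= ((LR * A + 1) * N) * `|t - s|.
      have -> : LR * (`|ct - cs| * N) * A + `|ct - cs| * N = ((LR * A + 1) * N) * `|ct - cs| by ring.
      apply: ler_wpM2l => //; apply: mulr_ge0 => //; apply: addr_ge0 => //; exact: mulr_ge0.
    move=> H; apply: le_trans H; exact: lerD.
  have cphi : continuous phi.
    apply: (lip_cont _ phiL); apply: mulr_ge0 => //; apply: addr_ge0 => //; exact: mulr_ge0.
  have t00 : (0 <= (0:R)) && ((0:R) <= 1) by apply/andP; split; lra.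
  have t11 : (0 <= (1:R)) && ((1:R) <= 1) by apply/andP; split; lra.
  have phi0 : phi 0 < 0.
    rewrite /phi clamp_id //.
    have -> : zr (bt 0) = z1.
      apply: (opt_uniq (zrO 0 t00)); apply: (opt_ext _ R1) => j.
      by rewrite /bt /bc mul0r addr0.
    by rewrite /bt /bc mul0r addr0 subr_lt0.
  have bt1 : forall j, bt 1 j = b2 j by move=> j; rewrite /bt /bc /=; ring.
  have phi1 : 0 <= phi 1.
    rewrite /phi clamp_id //; rewrite leNgt; apply/negP => H.
    have H' : dot (zr (bt 1)) (a i) < b2 i by move: H; rewrite bt1 subr_lt0.
    have O'' : opt S Q b2 (zr (bt 1)).
      apply: (opt_ext bt1 (L1 (zrO 1 t11) _)).
      by rewrite bt1; exact: ltW.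
    have := opt_uniq O'' O2 => E; rewrite E in H'.
    by move: H'; rewrite H2 ltxx.
  have cw : {within `[0, 1], continuous phi} by apply: continuous_subspaceT.
  have [t tI phit] := @IVT R phi 0 1 0 ler01 cw
     (ltac:(rewrite ge_min le_max (ltW phi0) phi1 orbT //)).
  have t01 : 0 <= t <= 1 by move: tI; rewrite in_itv.
  move: phit; rewrite /phi clamp_id // => /eqP; rewrite subr_eq0 => /eqP phit.
  have Os : opt S Q (bt t) (zr (bt t)) by apply: L1 (zrO t t01) _; rewrite phit.
  have Es := L3 Os phit.
  apply: le_trans (nz_tri _ _ (zr (bt t))) _.
  have r1 := HR _ _ _ _ R1 (zrO t t01).
  have r2 := HE _ _ _ _ Es E2.
  have n1 : nb (fun j => b1 j - bt t j) <= t * N.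
    have E : forall j, b1 j - bt t j = t * (b1 j - b2 j).
      by move=> j; rewrite /bt bc_sub1.
    by have := nb_lin E; rewrite ger0_norm //; case/andP: t01.
  have n2 : nb (fun j => bt t j - b2 j) <= (1 - t) * N.
    have E : forall j, bt t j - b2 j = (1 - t) * (b1 j - b2 j).
      by move=> j; rewrite /bt bc_sub2.
    by have := nb_lin E; rewrite ger0_norm //; case/andP: t01 => _ ?; rewrite subr_ge0.
  have : LR * nb (fun j => b1 j - bt t j) <= LR * (t * N) by apply: ler_wpM2l.
  have : LE * nb (fun j => bt t j - b2 j) <= LE * ((1 - t) * N) by apply: ler_wpM2l.
  case/andP: t01 => t0 t1 h2 h1.
  have : LR * (t * N) + LE * ((1 - t) * N) <= (LR + LE) * N.
    have -> : (LR + LE) * N = LR * (t * N) + LE * ((1 - t) * N) + (LR * ((1 - t) * N) + LE * (t * N)) by ring.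
    rewrite lerDl; apply: addr_ge0; apply: mulr_ge0 => //; apply: mulr_ge0 => //; lra.
  lra.
move=> b1 b2 z1 z2 O1 O2.
have le1 := (proj1 (feasFP _ _) (proj1 O1)).2.
have le2 := (proj1 (feasFP _ _) (proj1 O2)).2.
have LRE : LR <= LR + LE by rewrite lerDl.
have LER : LE <= LR + LE by rewrite lerDr.
have N0 := nb_ge0 (fun j => b1 j - b2 j).
move: le1; rewrite le_eqVlt => /orP[/eqP H1|H1]; move: le2; rewrite le_eqVlt => /orP[/eqP H2|H2].
- apply: le_trans (HE _ _ _ _ (L3 O1 H1) (L3 O2 H2)) _; exact: ler_wpM2r.
- by rewrite nz_sym nb_sym; apply: mixed.
- exact: mixed.
- apply: le_trans (HR _ _ _ _ (L2 O1 H1) (L2 O2 H2)) _; exact: ler_wpM2r.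
Qed.

End Step.

Theorem qp_main n : forall S Q : {set I}, #|S| = n -> exP S Q /\ lipP S Q.
Proof.
elim: n => [|n IH] S Q cS.
  have -> : S = finset.set0 by apply/eqP; rewrite -cards_eq0 cS.
  by split; [exact: base_ex | exact: base_lip].
have [i iS] : exists i, i \in S.
  by apply/set0Pn; rewrite -card_gt0 cS.
have cS' : #|S :\ i| = n by move: cS; rewrite (cardsD1 i S) iS add1n => -[].
have [ER LR] := IH (S :\ i) Q cS'.
have [EE LE] := IH (S :\ i) (i |: Q) cS'.
split; [exact: (L4 iS ER EE) | exact: (L5 iS ER LR LE)].
Qed.

End QP.



Section Traj.
Variable R : realType.
Variables (m n N : nat) (D : 'M[R]_(m, n)) (Mr Er : 'rV[R]_n) (Yr : 'rV[R]_m) (T : R).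

Definition Minv : 'M[R]_n := diag_mx (\row_i (Mr 0 i)^-1).
Definition YD := diag_mx Yr *m D.
Definition stepF (F : 'cV[R]_m) (W : 'cV[R]_n) := F + T *: (YD *m W).
Definition stepW (F : 'cV[R]_m) (W v u : 'cV[R]_n) :=
  W + Minv *m (T *: (- (diag_mx Er *m W) - D^T *m F + v + u)).
Definition Pc (P : 'M[R]_(n, N)) (k : nat) : 'cV[R]_n :=
  if @insub _ (fun k => k < N)%N 'I_N k is Some j then col j P else 0.

Fixpoint traj (f : 'cV[R]_m) (w : 'cV[R]_n) (P : 'M[R]_(n, N)) (u : 'cV[R]_n) (k : nat)
  : 'cV[R]_m * 'cV[R]_n :=
  if k is k'.+1 then
    let x := traj f w P u k' in (stepF x.1 x.2, stepW x.1 x.2 (Pc P k') u)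
  else (f, w).

Fixpoint Gm (k : nat) : 'M[R]_(m, n) * 'M[R]_n :=
  if k is k'.+1 then
    let X := Gm k' in
    (X.1 + T *: (YD *m X.2),
     X.2 + Minv *m (T *: (- (diag_mx Er *m X.2) - D^T *m X.1 + 1%:M)))
  else (0, 0).

Lemma lin2 p q (A A' B B' : 'M[R]_(p, q)) al :
  A + al *: A' + (B + al *: B') = (A + B) + al *: (A' + B').
Proof. by apply/matrixP => i j; rewrite !mxE; ring. Qed.

Lemma lin4 p q (X1 X2 Y1 Y2 v v' u u' : 'M[R]_(p, q)) al :
  - (X1 + al *: X2) - (Y1 + al *: Y2) + (v + al *: v') + (u + al *: u') =
  (- X1 - Y1 + v + u) + al *: (- X2 - Y2 + v' + u').
Proof. by apply/matrixP => i j; rewrite !mxE; ring. Qed.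

Lemma scl p q (x y : 'M[R]_(p, q)) t al : t *: (x + al *: y) = t *: x + al *: (t *: y).
Proof. by apply/matrixP => i j; rewrite !mxE; ring. Qed.

Lemma mx_aff p q r (A : 'M[R]_(p, q)) (x y : 'M[R]_(q, r)) al :
  A *m (x + al *: y) = A *m x + al *: (A *m y).
Proof. by rewrite mulmxDr scalemxAr. Qed.

Lemma stepF_lin F W F' W' al :
  stepF (F + al *: F') (W + al *: W') = stepF F W + al *: stepF F' W'.
Proof. by rewrite /stepF mx_aff scl lin2. Qed.

Lemma stepW_lin F W v u F' W' v' u' al :
  stepW (F + al *: F') (W + al *: W') (v + al *: v') (u + al *: u') =
  stepW F W v u + al *: stepW F' W' v' u'.
Proof. by rewrite /stepW !mx_aff lin4 scl mx_aff lin2. Qed.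

Lemma Pc_lin P P' al k : Pc (P + al *: P') k = Pc P k + al *: Pc P' k.
Proof.
rewrite /Pc; case: insub => [j|]; last by rewrite scaler0 addr0.
by apply/colP => i; rewrite !mxE.
Qed.

Lemma Pc0 k : Pc 0 k = 0.
Proof. by rewrite /Pc; case: insub => // j; apply/colP => i; rewrite !mxE. Qed.

Lemma traj_lin f w P u f' w' P' u' al k :
  traj (f + al *: f') (w + al *: w') (P + al *: P') (u + al *: u') k =
  ((traj f w P u k).1 + al *: (traj f' w' P' u' k).1,
   (traj f w P u k).2 + al *: (traj f' w' P' u' k).2).
Proof.
elim: k => [|k IH] //=.
by rewrite IH /= stepF_lin Pc_lin stepW_lin.
Qed.

Lemma traj_u u k : traj 0 0 0 u k = ((Gm k).1 *m u, (Gm k).2 *m u).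
Proof.
elim: k => [|k IH] /=; first by rewrite !mul0mx.
rewrite IH /= Pc0; congr (_, _).
  by rewrite /stepF mulmxDl -scalemxAl mulmxA.
rewrite /stepW addr0 mulmxDl -!mulmxA -scalemxAl.
by rewrite mulmxDl mulmxBl mulNmx mul1mx !mulmxA.
Qed.

Section Norms.
Implicit Types (p q r : nat).

Lemma mx_ge p q (A : 'M[R]_(p, q)) i j : `|A i j| <= mxnorm A.
Proof.
apply: le_trans (_ : \big[Num.max/0]_j `|A i j| <= _); first exact: le_bigmax.
rewrite /mxnorm; apply: le_bigmax.
Qed.

Lemma mx_le p q (A : 'M[R]_(p, q)) c : 0 <= c -> (forall i j, `|A i j| <= c) -> mxnorm A <= c.
Proof. by move=> c0 H; apply: bigmax_le => // i _; apply: bigmax_le => // j _. Qed.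

Lemma mx_ge0 p q (A : 'M[R]_(p, q)) : 0 <= mxnorm A.
Proof. exact: bigmax_ge_id. Qed.

Lemma mxD p q (A B : 'M[R]_(p, q)) : mxnorm (A + B) <= mxnorm A + mxnorm B.
Proof.
apply: mx_le => [|i j]; first by apply: addr_ge0; exact: mx_ge0.
by rewrite mxE; apply: le_trans (ler_normD _ _) _; apply: lerD; apply: mx_ge.
Qed.

Lemma mxZ p q (A : 'M[R]_(p, q)) t : mxnorm (t *: A) <= `|t| * mxnorm A.
Proof.
apply: mx_le => [|i j]; first by apply: mulr_ge0; [exact: normr_ge0 | exact: mx_ge0].
by rewrite mxE normrM ler_wpM2l // mx_ge.
Qed.

Lemma mxN p q (A : 'M[R]_(p, q)) : mxnorm (- A) <= mxnorm A.
Proof. by apply: mx_le => [|i j]; rewrite ?mx_ge0 // mxE normrN mx_ge. Qed.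

Definition nrm1 p q (A : 'M[R]_(p, q)) := \sum_i \sum_j `|A i j|.

Lemma nrm1_ge0 p q (A : 'M[R]_(p, q)) : 0 <= nrm1 A.
Proof. by apply: sumr_ge0 => i _; apply: sumr_ge0. Qed.

Lemma mxM p q r (A : 'M[R]_(p, q)) (B : 'M[R]_(q, r)) : mxnorm (A *m B) <= nrm1 A * mxnorm B.
Proof.
apply: mx_le => [|i j]; first by apply: mulr_ge0; [exact: nrm1_ge0 | exact: mx_ge0].
rewrite mxE; apply: le_trans (ler_norm_sum _ _ _) _.
apply: le_trans (_ : \sum_k `|A i k| * mxnorm B <= _).
  by apply: ler_sum => k _; rewrite normrM ler_wpM2l // mx_ge.
rewrite -mulr_suml ler_wpM2r ?mx_ge0 //.
by rewrite /nrm1 (bigD1 i) //= lerDl; apply: sumr_ge0 => i' _; apply: sumr_ge0 => l _.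
Qed.

End Norms.

Lemma Pc_norm P k : mxnorm (Pc P k) <= mxnorm P.
Proof.
rewrite /Pc; case: insub => [j|]; last first.
  by apply: mx_le => [|i l]; rewrite ?mx_ge0 // mxE normr0 mx_ge0.
by apply: mx_le => [|i l]; rewrite ?mx_ge0 // mxE mx_ge.
Qed.

Definition aa := 1 + `|T| * (nrm1 YD + nrm1 Minv * (nrm1 (diag_mx Er) + nrm1 D^T)).
Definition gam := aa + `|T| * nrm1 Minv.

Lemma aa_ge1 : 1 <= aa.
Proof.
rewrite /aa lerDl mulr_ge0 // addr_ge0 ?nrm1_ge0 // mulr_ge0 ?nrm1_ge0 //.
by rewrite addr_ge0 ?nrm1_ge0.
Qed.

Lemma gam_ge1 : 1 <= gam.
Proof. by apply: le_trans aa_ge1 _; rewrite /gam lerDl mulr_ge0 ?nrm1_ge0. Qed.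

Lemma traj_bound f w P k :
  mxnorm (traj f w P 0 k).1 + mxnorm (traj f w P 0 k).2 <=
  gam ^+ k * (mxnorm f + mxnorm w + mxnorm P).
Proof.
set X := mxnorm f + mxnorm w + mxnorm P.
have P0 := mx_ge0 P; have f0 := mx_ge0 f; have w0 := mx_ge0 w.
elim: k => [|k IH] /=; first by rewrite expr0 mul1r /X lerDl.
set F := (traj f w P 0 k).1; set W := (traj f w P 0 k).2.
have hF := mx_ge0 F; have hW := mx_ge0 W.
have nT := normr_ge0 T.
have nYD := nrm1_ge0 YD; have nM := nrm1_ge0 Minv.
have nE := nrm1_ge0 (diag_mx Er); have nDT := nrm1_ge0 D^T.
have s1 : mxnorm (stepF F W) <= mxnorm F + `|T| * (nrm1 YD * mxnorm W).
  apply: le_trans (mxD _ _) _; rewrite lerD2l.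
  by apply: le_trans (mxZ _ _) _; rewrite ler_wpM2l // mxM.
have s2 : mxnorm (stepW F W (Pc P k) 0) <=
    mxnorm W + nrm1 Minv * (`|T| * (nrm1 (diag_mx Er) * mxnorm W + nrm1 D^T * mxnorm F + mxnorm P)).
  apply: le_trans (mxD _ _) _; rewrite lerD2l.
  apply: le_trans (mxM _ _) _; rewrite ler_wpM2l //.
  apply: le_trans (mxZ _ _) _; rewrite ler_wpM2l // addr0.
  apply: le_trans (mxD _ _) _; apply: lerD; last exact: Pc_norm.
  apply: le_trans (mxD _ _) _; apply: lerD.
    by apply: le_trans (mxN _) _; apply: mxM.
  by apply: le_trans (mxN _) _; apply: mxM.
have gk : 1 <= gam ^+ k by apply: exprn_ege1; exact: gam_ge1.
have X0 : 0 <= X by rewrite /X !addr_ge0.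
have PX : mxnorm P <= X by rewrite /X lerDr addr_ge0.
rewrite exprS -mulrA /gam.
have H1 : mxnorm (stepF F W) + mxnorm (stepW F W (Pc P k) 0) <=
          aa * (mxnorm F + mxnorm W) + `|T| * nrm1 Minv * mxnorm P.
  apply: le_trans (lerD s1 s2) _; rewrite /aa.
  set a1 := `|T| * (nrm1 YD * mxnorm W).
  have -> : nrm1 Minv * (`|T| * (nrm1 (diag_mx Er) * mxnorm W + nrm1 D^T * mxnorm F + mxnorm P))
     = `|T| * nrm1 Minv * nrm1 (diag_mx Er) * mxnorm W + `|T| * nrm1 Minv * nrm1 D^T * mxnorm F
       + `|T| * nrm1 Minv * mxnorm P by ring.
  set b1 := `|T| * nrm1 Minv * nrm1 (diag_mx Er).
  set b2 := `|T| * nrm1 Minv * nrm1 D^T.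
  have hb1 : 0 <= b1 by rewrite /b1 !mulr_ge0.
  have hb2 : 0 <= b2 by rewrite /b2 !mulr_ge0.
  have hc : 0 <= `|T| * nrm1 YD by rewrite mulr_ge0.
  have -> : (1 + `|T| * (nrm1 YD + nrm1 Minv * (nrm1 (diag_mx Er) + nrm1 D^T))) * (mxnorm F + mxnorm W)
    = mxnorm F + mxnorm W + (`|T| * nrm1 YD + b1 + b2) * (mxnorm F + mxnorm W) by rewrite /b1 /b2; ring.
  rewrite /a1; nra.
apply: le_trans H1 _.
have ha : 0 <= aa by apply: le_trans aa_ge1; lra.
have hT : 0 <= `|T| * nrm1 Minv by rewrite mulr_ge0.
have e1 : aa * (mxnorm F + mxnorm W) <= aa * (gam ^+ k * X) by rewrite ler_wpM2l.
have e2 : `|T| * nrm1 Minv * mxnorm P <= `|T| * nrm1 Minv * (gam ^+ k * X).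
  rewrite ler_wpM2l //; apply: le_trans PX _; rewrite ler_peMl //.
rewrite /gam in e1 e2 *.
set G := gam ^+ k * X in e1 e2 *.
have -> : (aa + `|T| * nrm1 Minv) * G = aa * G + `|T| * nrm1 Minv * G by ring.
exact: lerD.
Qed.

End Traj.



Section App.
Variable R : realType.
Variables (m n N : nat) (D : 'M[R]_(m, n)) (Mr Er : 'rV[R]_n) (Yr : 'rV[R]_m)
  (Iu Iw : {set 'I_n}) (T d : R) (c eps Ti wlo whi : 'cV[R]_n).
Hypothesis HM : forall i, 0 < Mr 0 i.
Hypothesis Hc : forall i, i \in Iu -> 0 < c i 0.
Hypothesis Heps : forall i, 0 < eps i 0.
Hypothesis Hd : 0 < d.

Local Notation tr := (@traj R m n N D Mr Er Yr T).
Local Notation Gw k := (Gm D Mr Er Yr T k).2.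

Definition zmk (u : 'cV[R]_n) (be : R) : 'rV[R]_(1 + n) := row_mx (\row_(j < 1) be) u^T.
Definition uz (z : 'rV[R]_(1 + n)) : 'cV[R]_n := (rsubmx z)^T.
Definition bz (z : 'rV[R]_(1 + n)) : R := z 0 (lshift n ord0).

Lemma uz_zmk u be : uz (zmk u be) = u.
Proof. by rewrite /uz /zmk row_mxKr trmxK. Qed.
Lemma bz_zmk u be : bz (zmk u be) = be.
Proof. by rewrite /bz /zmk row_mxEl mxE. Qed.
Lemma zmk_eta z : zmk (uz z) (bz z) = z.
Proof.
rewrite /zmk /uz trmxK -[z in RHS]hsubmxK; congr row_mx.
by apply/rowP => j; rewrite (ord1 j) !mxE.
Qed.

Definition hw : 'rV[R]_(1 + n) := zmk (\col_i (if i \in Iu then c i 0 else 1)) d.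
Lemma hw_pos l : 0 < hw 0 l.
Proof.
rewrite -(fintype.splitK l); case: (fintype.split l) => j /=.
  by rewrite /hw /zmk row_mxEl mxE.
rewrite /hw /zmk row_mxEr !mxE; case: ifP => H; [exact: Hc | exact: ltr01].
Qed.

Lemma dot_zmk u be v ga : dot (zmk u be) (zmk v ga) = be * ga + \sum_i u i 0 * v i 0.
Proof.
rewrite /dot big_split_ord big_ord1 /zmk !row_mxEl !mxE; congr (_ + _).
by apply: eq_bigr => i _; rewrite !row_mxEr !mxE.
Qed.

Lemma q_zmk u be : inA Iu u -> q hw (zmk u be) = mpc_cost Iu c d u be.
Proof.
move=> Hu; rewrite /q /mpc_cost big_split_ord big_ord1 /hw /zmk !row_mxEl !mxE addrC.
congr (_ + _); rewrite [RHS]big_mkcond /=; apply: eq_bigr => i _; rewrite !row_mxEr !mxE.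
case: ifP => // H; rewrite Hu ?H //; by rewrite expr0n mulr0.
Qed.

Definition Ity := (('I_n + 'I_n) + ('I_N * 'I_n + 'I_N * 'I_n))%type.
Definition dl (i : 'I_n) : 'cV[R]_n := \col_j (j == i)%:R.
Definition acon (j : Ity) : 'rV[R]_(1 + n) :=
  match j with
  | inl (inl i) => zmk (dl i) 0
  | inl (inr i) => zmk (- dl i) 0
  | inr (inl (k, i)) => if i \in Iw then zmk (row i (Gw k.+1))^T (-1) else 0
  | inr (inr (k, i)) => if i \in Iw then zmk (- (row i (Gw k.+1))^T) (-1) else 0
  end.
Definition free (f0 : 'cV[R]_m) (w0 : 'cV[R]_n) (P : 'M[R]_(n, N)) k := (tr f0 w0 P 0 k).2.
Definition bcon (P : 'M[R]_(n, N)) (f0 : 'cV[R]_m) (w0 a0 : 'cV[R]_n) (j : Ity) : R :=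
  match j with
  | inl (inl i) | inl (inr i) => eps i 0 * `|a0 i 0|
  | inr (inl (k, i)) => if i \in Iw then whi i 0 - free f0 w0 P k.+1 i 0 else 0
  | inr (inr (k, i)) => if i \in Iw then free f0 w0 P k.+1 i 0 - wlo i 0 else 0
  end.

Lemma dot_dl u be i : dot (zmk u be) (zmk (dl i) 0) = u i 0.
Proof.
rewrite dot_zmk mulr0 add0r (bigD1 i) //= !mxE eqxx mulr1 big1 ?addr0 // => j ji.
by rewrite !mxE (negbTE ji) mulr0.
Qed.

Lemma dot_ndl u be i : dot (zmk u be) (zmk (- dl i) 0) = - u i 0.
Proof.
rewrite dot_zmk mulr0 add0r (bigD1 i) //= !mxE eqxx mulrN1 big1 ?addr0 // => j ji.
by rewrite !mxE (negbTE ji) oppr0 mulr0.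
Qed.

Lemma dot_row u be (G : 'M[R]_n) i : dot (zmk u be) (zmk (row i G)^T (-1)) = - be + (G *m u) i 0.
Proof.
rewrite dot_zmk mulrN1 mxE; congr (_ + _); apply: eq_bigr => j _; rewrite !mxE mulrC //.
Qed.

Lemma dot_nrow u be (G : 'M[R]_n) i : dot (zmk u be) (zmk (- (row i G)^T) (-1)) = - be - (G *m u) i 0.
Proof.
rewrite dot_zmk mulrN1 mxE -sumrN; congr (_ + _); apply: eq_bigr => j _; rewrite !mxE mulrN mulrC //.
Qed.

Lemma dot0 z : dot z (0 : 'rV[R]_(1 + n)) = 0.
Proof. by rewrite /dot big1 // => l _; rewrite mxE mulr0. Qed.

Lemma tr_dec f0 w0 P u k : (tr f0 w0 P u k).2 = Gw k *m u + free f0 w0 P k.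
Proof.
have := traj_lin D Mr Er Yr T f0 w0 P 0 0 0 0 u 1 k.
rewrite !scale1r !addr0 add0r => ->; rewrite /= traj_u /= addrC //.
Qed.

Lemma Pc_col (P : 'M[R]_(n, N)) (j : 'I_N) : Pc P j = col j P.
Proof. by rewrite /Pc valK. Qed.

Lemma Minv_diag : Minv Mr *m diag_mx Mr = 1%:M.
Proof.
rewrite /Minv mulmx_diag -diag_const_mx; congr diag_mx.
by apply/rowP => j; rewrite !mxE mulVf // gt_eqF.
Qed.

Lemma diag_Minv : diag_mx Mr *m Minv Mr = 1%:M.
Proof.
rewrite /Minv mulmx_diag -diag_const_mx; congr diag_mx.
by apply/rowP => j; rewrite !mxE mulfV // gt_eqF.
Qed.

Lemma inord_ord (k : 'I_N) : (inord k : 'I_N.+1) = k :> nat.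
Proof. by rewrite inordK // ltnW // ltnS. Qed.
Lemma inord_ordS (k : 'I_N) : (inord k.+1 : 'I_N.+1) = k.+1 :> nat.
Proof. by rewrite inordK // ltnS. Qed.

Section Feas.
Variables (P : 'M[R]_(n, N)) (f0 : 'cV[R]_m) (w0 a0 : 'cV[R]_n).

Definition feasA z := feas acon [set: Ity] finset.set0 (bcon P f0 w0 a0) z.

Lemma feas_cols F W Aa u be :
  mpc_feasible D Mr Er Yr Iu Iw T eps Ti wlo whi P f0 w0 a0 F W Aa u be ->
  forall k, (k <= N)%N ->
    col (inord k) F = (tr f0 w0 P u k).1 /\ col (inord k) W = (tr f0 w0 P u k).2.
Proof.
case=> H1 [H2 [_ [_ [_ [[F0 W0 _] _]]]]].
elim=> [|k IH] Hk.
  have -> : (inord 0 : 'I_N.+1) = 0 by apply/val_inj; rewrite /= inordK.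
  by rewrite F0 W0.
have Hk' : (k < N)%N by [].
have [IF IW] := IH (ltnW Hk').
set k' := Ordinal Hk'.
have E1 := H1 k'; have E2 := H2 k'; rewrite /= in E1 E2.
rewrite /= -IF -IW; split; first by rewrite E1 /stepF /YD.
rewrite /stepW -(Pc_col P k') /= in E2.
rewrite -[col _ W]mul1mx -Minv_diag -mulmxA E2 mulmxDr mulmxA Minv_diag mul1mx.
by rewrite IF IW.
Qed.

Lemma Wval F W Aa u be :
  mpc_feasible D Mr Er Yr Iu Iw T eps Ti wlo whi P f0 w0 a0 F W Aa u be ->
  forall (k : 'I_N) i, W i (inord k.+1) = (Gw k.+1 *m u) i 0 + free f0 w0 P k.+1 i 0.
Proof.
move=> H k i; have [_ IW] := feas_cols H (ltn_ord k).
have := congr1 (fun M : 'cV[R]_n => M i 0) IW; rewrite mxE => ->.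
by rewrite tr_dec mxE.
Qed.

Lemma feasA_of_mpc F W Aa u be :
  mpc_feasible D Mr Er Yr Iu Iw T eps Ti wlo whi P f0 w0 a0 F W Aa u be ->
  feasA (zmk u be) /\ inA Iu u.
Proof.
move=> H; have HW := Wval H.
case: H => _ [_ [_ [_ [Hu [_ [Hw Hb]]]]]].
have box i : `|u i 0| <= eps i 0 * `|a0 i 0|.
  case: (boolP (i \in Iu)) => iIu; first exact: Hb.
  by rewrite Hu // normr0 mulr_ge0 // ltW.
split=> //; split=> [j _|j]; last by rewrite inE.
case: j => [[i|i]|[[k i]|[k i]]] /=.
- by rewrite dot_dl; apply: le_trans (box i); exact: ler_norm.
- rewrite dot_ndl; apply: le_trans (box i); rewrite -normrN; exact: ler_norm.
- case: ifP => iw; last by rewrite dot0.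
  rewrite dot_row; have := Hw k i iw; rewrite HW; case/andP => _; lra.
- case: ifP => iw; last by rewrite dot0.
  rewrite dot_nrow; have := Hw k i iw; rewrite HW; case/andP => h _; lra.
Qed.

Fixpoint atraj (u : 'cV[R]_n) (k : nat) : 'cV[R]_n :=
  if k is k'.+1 then
    \col_i (if i \in Iu then atraj u k' i 0
                 + T * (- (atraj u k' i 0 / Ti i 0) - (tr f0 w0 P u k').2 i 0 + u i 0)
            else 0)
  else a0.

Definition Fm u : 'M[R]_(m, N.+1) := \matrix_(e, k) (tr f0 w0 P u k).1 e 0.
Definition Wm u : 'M[R]_(n, N.+1) := \matrix_(i, k) (tr f0 w0 P u k).2 i 0.
Definition Am u : 'M[R]_(n, N.+1) := \matrix_(i, k) atraj u k i 0.

Lemma colF u (j : 'I_N.+1) : col j (Fm u) = (tr f0 w0 P u j).1.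
Proof. by apply/colP => e; rewrite !mxE. Qed.
Lemma colW u (j : 'I_N.+1) : col j (Wm u) = (tr f0 w0 P u j).2.
Proof. by apply/colP => e; rewrite !mxE. Qed.
Lemma colA u (j : 'I_N.+1) : col j (Am u) = atraj u j.
Proof. by apply/colP => e; rewrite !mxE. Qed.

Lemma mpc_of_feasA z : inA Iu a0 -> feasA z ->
  mpc_feasible D Mr Er Yr Iu Iw T eps Ti wlo whi P f0 w0 a0
    (Fm (uz z)) (Wm (uz z)) (Am (uz z)) (uz z) (bz z).
Proof.
move=> Ha0 [Hz _].
rewrite -(zmk_eta z) in Hz.
set u := uz z; set be := bz z.
have {}Hz : forall j : Ity, dot (zmk u be) (acon j) <= bcon P f0 w0 a0 j.
  by move=> j; apply: Hz; rewrite inE.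
have bp i : u i 0 <= eps i 0 * `|a0 i 0|.
  by have := Hz (inl (inl i)) ; rewrite /= dot_dl.
have bm i : - u i 0 <= eps i 0 * `|a0 i 0|.
  by have := Hz (inl (inr i)) ; rewrite /= dot_ndl.
split.
  by move=> k; rewrite !colF colW inord_ordS inord_ord /= /stepF /YD.
split.
  move=> k; rewrite !colW colF inord_ordS inord_ord /=.
  by rewrite /stepW mulmxDr mulmxA diag_Minv mul1mx Pc_col.
split.
  by move=> k i iIu; rewrite !mxE inord_ordS inord_ord /= [LHS]mxE iIu !mxE.
split.
  move=> k i iIu; rewrite mxE; case: (nat_of_ord k) => [|k'] /=; first exact: Ha0.
  by rewrite mxE (negbTE iIu).
split.
  move=> w wIu; have := bp w; have := bm w; rewrite Ha0 // normr0 mulr0 => h1 h2.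
  by apply/le_anti; rewrite h2 /= -oppr_le0 h1.
split.
  by rewrite colF colW colA.
split.
  move=> k i iw.
  have e : Wm u i (inord k.+1) = (Gw k.+1 *m u) i 0 + free f0 w0 P k.+1 i 0.
    by rewrite mxE inord_ordS tr_dec mxE.
  have h1 := Hz (inr (inl (k, i))) ; have h2 := Hz (inr (inr (k, i))).
  rewrite /= iw dot_row in h1; rewrite /= iw dot_nrow in h2.
  rewrite e; apply/andP; split; lra.
move=> i iIu; rewrite ler_norml; apply/andP; split; last exact: bp.
by rewrite lerNl; exact: bm.
Qed.

Definition optA z := opt hw acon [set: Ity] finset.set0 (bcon P f0 w0 a0) z.

Lemma opt_mpc z : inA Iu a0 -> optA z ->
  mpc_optimal D Mr Er Yr Iu Iw T c eps Ti wlo whi d P f0 w0 a0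
    (Fm (uz z)) (Wm (uz z)) (Am (uz z)) (uz z) (bz z).
Proof.
move=> Ha0 [Fz Oz].
have Hf := mpc_of_feasA Ha0 Fz.
split=> // F' W' A' u' be' Hf'.
have [Fy Hu'] := feasA_of_mpc Hf'.
have Huz : inA Iu (uz z) by case: Hf => _ [_ [_ [_ [H _]]]].
rewrite -q_zmk // -q_zmk // zmk_eta; exact: Oz.
Qed.

Lemma mpc_opt F W A u be : inA Iu a0 ->
  mpc_optimal D Mr Er Yr Iu Iw T c eps Ti wlo whi d P f0 w0 a0 F W A u be ->
  optA (zmk u be).
Proof.
move=> Ha0 [Hf O]; have [Fz Hu] := feasA_of_mpc Hf.
split=> // y Fy.
have Hy := mpc_of_feasA Ha0 Fy.
have Huy : inA Iu (uz y) by case: Hy => _ [_ [_ [_ [H _]]]].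
rewrite q_zmk // -(zmk_eta y) q_zmk //; exact: O Hy.
Qed.

Lemma feasA_ex : exists z, feasA z.
Proof.
exists (zmk 0 (nb (bcon P f0 w0 a0))); split=> [j _|j]; last by rewrite inE.
have Hb := nb_ge (bcon P f0 w0 a0) j.
have Hb' : - nb (bcon P f0 w0 a0) <= bcon P f0 w0 a0 j.
  by rewrite lerNl; apply: le_trans Hb; rewrite -normrN ler_norm.
case: j Hb Hb' => [[i|i]|[[k i]|[k i]]] /= Hb Hb'.
- by rewrite dot_dl mxE mulr_ge0 // ltW.
- by rewrite dot_ndl mxE oppr0 mulr_ge0 // ltW.
- case: ifP => iw; last by rewrite dot0.
  by rewrite dot_row mulmx0 mxE addr0; move: Hb'; rewrite iw.
- case: ifP => iw; last by rewrite dot0.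
  by rewrite dot_nrow mulmx0 mxE subr0; move: Hb'; rewrite iw.
Qed.

Lemma uhat_eq z : inA Iu a0 -> optA z ->
  uhat_star D Mr Er Yr Iu Iw T c eps Ti wlo whi d P f0 w0 a0 = uz z.
Proof.
move=> Ha0 Oz; apply: xget_unique.
  by exists (Fm (uz z)), (Wm (uz z)), (Am (uz z)), (bz z); exact: opt_mpc.
move=> y [F [W [A [be H]]]].
have Oy := mpc_opt Ha0 H.
by rewrite -(uz_zmk y be) (opt_uniq hw_pos Oy Oz).
Qed.

End Feas.

Lemma free_diff P1 P2 f1 f2 w1 w2 k :
  free f1 w1 P1 k - free f2 w2 P2 k = (tr (f1 - f2) (w1 - w2) (P1 - P2) 0 k).2.
Proof.
have := traj_lin D Mr Er Yr T f2 w2 P2 0 (f1 - f2) (w1 - w2) (P1 - P2) 0 1 k.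
rewrite !scale1r !addr0 ![_ + (_ - _)]addrC !subrK => E.
by rewrite /free E /= addrC addKr.
Qed.

Lemma free_bound P1 P2 f1 f2 w1 w2 k i : (k <= N)%N ->
  `|free f1 w1 P1 k i 0 - free f2 w2 P2 k i 0| <=
   gam D Mr Er Yr T ^+ N * (mxnorm (P1 - P2) + mxnorm (f1 - f2) + mxnorm (w1 - w2)).
Proof.
move=> kN.
have -> : free f1 w1 P1 k i 0 - free f2 w2 P2 k i 0 = (free f1 w1 P1 k - free f2 w2 P2 k) i 0.
  by rewrite !mxE.
rewrite free_diff.
apply: le_trans (mx_ge _ i 0) _.
set X := mxnorm (f1 - f2) + mxnorm (w1 - w2) + mxnorm (P1 - P2).
have := traj_bound D Mr Er Yr T (f1 - f2) (w1 - w2) (P1 - P2) k.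
have g1 := gam_ge1 D Mr Er Yr T.
have X0 : 0 <= X by rewrite /X !addr_ge0 ?mx_ge0.
move=> H.
have H' : mxnorm (tr (f1 - f2) (w1 - w2) (P1 - P2) 0 k).2 <= gam D Mr Er Yr T ^+ k * X.
  by apply: le_trans H; rewrite lerDr mx_ge0.
apply: le_trans H' _.
have -> : mxnorm (P1 - P2) + mxnorm (f1 - f2) + mxnorm (w1 - w2) = X by rewrite /X; ring.
by rewrite ler_wpM2r // ler_weXn2l.
Qed.

Lemma lip_main : exists L : R, 0 <= L /\
  forall (P1 P2 : 'M[R]_(n, N)) (f1 f2 : 'cV[R]_m) (w1 w2 a1 a2 : 'cV[R]_n),
    inA Iu a1 -> inA Iu a2 ->
    mxnorm (uhat_star D Mr Er Yr Iu Iw T c eps Ti wlo whi d P1 f1 w1 a1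
            - uhat_star D Mr Er Yr Iu Iw T c eps Ti wlo whi d P2 f2 w2 a2)
    <= L * (mxnorm (P1 - P2) + mxnorm (f1 - f2) + mxnorm (w1 - w2) + mxnorm (a1 - a2)).
Proof.
have [Ex [L [L0 HL]]] := @qp_main R (1 + n) hw hw_pos Ity acon #|[set: Ity]%SET| [set: Ity]%SET finset.set0 erefl.
set C := \sum_i eps i 0 + gam D Mr Er Yr T ^+ N.
have g1 := gam_ge1 D Mr Er Yr T.
have gN : 0 <= gam D Mr Er Yr T ^+ N by apply: exprn_ge0; apply: le_trans g1; lra.
have E0 : 0 <= \sum_i eps i 0 by apply: sumr_ge0 => i _; exact: ltW.
have C0 : 0 <= C by rewrite addr_ge0.
exists (L * C); split; first by rewrite mulr_ge0.
move=> P1 P2 f1 f2 w1 w2 a1 a2 Ha1 Ha2.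
have [z1 O1] := Ex _ (feasA_ex P1 f1 w1 a1).
have [z2 O2] := Ex _ (feasA_ex P2 f2 w2 a2).
rewrite (uhat_eq Ha1 O1) (uhat_eq Ha2 O2).
set Dl := mxnorm (P1 - P2) + mxnorm (f1 - f2) + mxnorm (w1 - w2) + mxnorm (a1 - a2).
have D0 : 0 <= Dl by rewrite /Dl !addr_ge0 ?mx_ge0.
have Hz : mxnorm (uz z1 - uz z2) <= nz (z1 - z2).
  apply: mx_le => [|i j]; first exact: nz_ge0.
  have := nz_ge (z1 - z2) (rshift 1 i); rewrite (ord1 j) !mxE //.
have Hb : nb (fun j => bcon P1 f1 w1 a1 j - bcon P2 f2 w2 a2 j) <= C * Dl.
  apply: nb_le => [|j]; first by rewrite mulr_ge0.
  have Da : mxnorm (a1 - a2) <= Dl by rewrite /Dl lerDr !addr_ge0 ?mx_ge0.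
  have Df : mxnorm (P1 - P2) + mxnorm (f1 - f2) + mxnorm (w1 - w2) <= Dl by rewrite /Dl lerDl mx_ge0.
  have box i : Num.norm (eps i 0 * Num.norm (a1 i 0) - eps i 0 * Num.norm (a2 i 0)) <= C * Dl.
    rewrite -mulrBr normrM (ger0_norm (ltW (Heps i))).
    apply: le_trans (_ : eps i 0 * mxnorm (a1 - a2) <= _).
      apply: ler_wpM2l; first exact: ltW.
      apply: le_trans (ler_dist_dist _ _) _.
      by have := mx_ge (a1 - a2) i 0; rewrite !mxE.
    apply: le_trans (_ : (\sum_i eps i 0) * Dl <= _); last first.
      by rewrite ler_wpM2r // /C lerDl.
    apply: le_trans (_ : eps i 0 * Dl <= _); first by rewrite ler_wpM2l // ltW.
    rewrite ler_wpM2r //; rewrite (bigD1 i) //= lerDl; apply: sumr_ge0 => l _; exact: ltW.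
  have fr (k : 'I_N) i : `|free f1 w1 P1 k.+1 i 0 - free f2 w2 P2 k.+1 i 0| <= C * Dl.
    apply: le_trans (free_bound _ _ _ _ _ _ _ (ltn_ord k)) _.
    apply: le_trans (_ : gam D Mr Er Yr T ^+ N * Dl <= _); first by rewrite ler_wpM2l.
    by rewrite ler_wpM2r // /C lerDr.
  case: j => [[i|i]|[[k i]|[k i]]] /=.
  - exact: box.
  - exact: box.
  - case: ifP => _; last by rewrite subrr normr0 mulr_ge0.
    by rewrite opprB addrC addrA subrK distrC; exact: fr.
  - case: ifP => _; last by rewrite subrr normr0 mulr_ge0.
    by rewrite opprB addrA subrK; exact: fr.
apply: le_trans Hz _; apply: le_trans (HL _ _ _ _ O1 O2) _.
by rewrite -mulrA ler_wpM2l.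
Qed.

End App.


Lemma sat_id (R : realType) (x b : R) : `|x| <= b -> sat x b = x.
Proof.
rewrite ler_norml => /andP[h1 h2]; rewrite /sat min_r // max_r //.
Qed.

Lemma sat_bound (R : realType) (x b : R) : 0 <= b -> - b <= sat x b <= b.
Proof.
move=> b0; rewrite /sat le_max lexx /= ge_max ge_min lexx /= andbT.
by rewrite -subr_ge0 opprK addr_ge0.
Qed.

Lemma uhat_bound (R : realType) (m n N : nat)
  (D : 'M[R]_(m, n)) (Mr Er : 'rV[R]_n) (Yr : 'rV[R]_m)
  (Iu Iw : {set 'I_n}) (T d : R) (c eps Ti wlo whi : 'cV[R]_n)
  (Heps : forall i, 0 < eps i 0) P f0 w0 a0 i :
  `|uhat_star D Mr Er Yr Iu Iw T c eps Ti wlo whi d (N:=N) P f0 w0 a0 i 0| <= eps i 0 * `|a0 i 0|.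
Proof.
rewrite /uhat_star; case: xgetP => [y _ [F [W [A [be [Hf _]]]]]|_].
  case: Hf => _ [_ [_ [_ [Hu [_ [_ Hb]]]]]].
  case: (boolP (i \in Iu)) => iIu; first exact: Hb.
  by rewrite Hu // normr0 mulr_ge0 // ltW.
by rewrite mxE normr0 mulr_ge0 // ltW.
Qed.

Unset Implicit Arguments. Set Strict Implicit. Set Printing Implicit Defensive.

Theorem lemma4p2 (R : realType) (m n N : nat)
  (D : 'M[R]_(m, n)) (Mr Er : 'rV[R]_n) (Yr : 'rV[R]_m)
  (Iu Iw : {set 'I_n}) (T tt d : R) (c eps Ti wlo whi : 'cV[R]_n)
  (* standing assumptions on the network and the parameters *)
  (HDinc : incidence_matrix D) (HDconn : graph_connected D)
  (HM : forall i, 0 < Mr 0 i) (HE : forall i, 0 < Er 0 i)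
  (HY : forall e, 0 < Yr 0 e)
  (HIw : Iw \subset Iu)
  (HT : 0 < T) (Htt : 0 < tt) (HN : (N%:R : R) = (Num.ceil (tt / T))%:~R)
  (Hc : forall i, i \in Iu -> 0 < c i 0)
  (Heps : forall i, 0 < eps i 0)
  (HTi : forall i, i \in Iu -> 0 < Ti i 0)
  (Hd : 0 < d)
  (Hwb : forall i, i \in Iw -> wlo i 0 < whi i 0)
  (* closed-loop trajectory *)
  (Delta : nat -> R) (pf : nat -> R -> 'cV[R]_n) (p : R -> 'cV[R]_n)
  (f : R -> 'cV[R]_m) (w alpha uMPC uhMPC : R -> 'cV[R]_n)
  (HD0 : Delta 0%N = 0) (HDinc' : forall j, Delta j < Delta j.+1)
  (HDunb : forall t : R, exists j, t < Delta j)
  (HuMPC : forall (j : nat) (t : R), Delta j <= t < Delta j.+1 ->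
     uMPC t = uhat_star D Mr Er Yr Iu Iw T c eps Ti wlo whi d
                (forecast_mx N T (Delta j) (pf j))
                (f (Delta j)) (w (Delta j)) (alpha (Delta j)))
  (Huh : forall (t : R) (i : 'I_n),
     uhMPC t i 0 = sat (uMPC t i 0) (eps i 0 * `|alpha t i 0|))
  (Halpha0 : forall (t : R) (i : 'I_n), i \notin Iu -> alpha t i 0 = 0)
  (Halpha : forall i : 'I_n, i \in Iu ->
     solves_ode (fun s => - (alpha s i 0 / Ti i 0) - w s i 0 + uhMPC s i 0)
                (fun s => alpha s i 0))
  (Hf : forall e : 'I_m,
     solves_ode (fun s => (diag_mx Yr *m D *m w s) e 0) (fun s => f s e 0))
  (Hw : forall i : 'I_n,
     solves_ode (fun s => (- (Er 0 i * w s i 0) - (D^T *m f s) i 0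
                           + p s i 0 + alpha s i 0) / Mr 0 i)
                (fun s => w s i 0)) :
  (exists L : R, 0 <= L /\
     forall (P1 P2 : 'M[R]_(n, N)) (f1 f2 : 'cV[R]_m) (w1 w2 a1 a2 : 'cV[R]_n),
       inA Iu a1 -> inA Iu a2 ->
       mxnorm (uhat_star D Mr Er Yr Iu Iw T c eps Ti wlo whi d P1 f1 w1 a1
               - uhat_star D Mr Er Yr Iu Iw T c eps Ti wlo whi d P2 f2 w2 a2)
       <= L * (mxnorm (P1 - P2) + mxnorm (f1 - f2) + mxnorm (w1 - w2)
               + mxnorm (a1 - a2))) /\
  (forall j : nat,
     uhMPC (Delta j) = uhat_star D Mr Er Yr Iu Iw T c eps Ti wlo whi d
                         (forecast_mx N T (Delta j) (pf j))
                         (f (Delta j)) (w (Delta j)) (alpha (Delta j))) /\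
  (forall (t : R) (i : 'I_n), 0 <= t ->
     alpha t i 0 * uhMPC t i 0 <= eps i 0 * alpha t i 0 ^+ 2).
Proof.
split; first exact: (lip_main N D Er Yr Iw T Ti wlo whi HM Hc Heps Hd).
split.
  move=> j; apply/colP => i.
  rewrite Huh (HuMPC j (Delta j)); last by rewrite lexx HDinc'.
  apply: sat_id; apply: uhat_bound => //.
move=> t i _; rewrite Huh.
set b := eps i 0 * `|alpha t i 0|.
have b0 : 0 <= b by rewrite /b mulr_ge0 // ltW.
have /andP[s1 s2] := @sat_bound _ (uMPC t i 0) b b0.
set s := sat _ _ in s1 s2 *.
apply: le_trans (ler_norm _) _; rewrite normrM.
apply: le_trans (_ : `|alpha t i 0| * b <= _).
  by apply: ler_wpM2l => //; rewrite ler_norml s1 s2.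
rewrite /b mulrCA -normrM expr2 ger0_norm //.
by rewrite -expr2 sqr_ge0.
Qed.
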